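(* Let $n\ge 1$ be odd. Consider the generalized $n$-gene repressilator system $$\dot r_i = a_i(p_{i-1}) - d_{r_i}(r_i),\qquad \dot p_i = k_i(r_i) - d_{p_i}(p_i),\qquad i=1,\dots,n,$$ (indices mod $n$), with functions satisfying the standing assumptions in the context, and let $E_C=(r_1^*,\dots,r_n^*,p_1^*,\dots,p_n^* )\in(0,\infty)^{2n}$ be its (central) steady state. If $\mathcal{D} > |\mathcal{K}|$, where $\mathcal{D}$ and $\mathcal{K}$ are evaluated at $E_C$, then $E_C$ is locally asymptotically stable.
   Context: Standing assumptions: each $a_i:[0,\infty)\to\mathbb{R}$ is $C^1$, nonnegative, strictly decreasing, with $a_i(0)>0$; each $d_{r_i}, d_{p_i}, k_i:[0,\infty)\to\mathbb{R}$ is $C^1$, vanishes at $0$, and is strictly increasing on $(0,\infty)$. At the steady state define $\partial_i^R := d_{r_i}'(r_i^* )$, $\partial_i^P := d_{p_i}'(p_i^* )$, $\mathcal{D}:=\prod_{i=1}^n \partial_i^R\partial_i^P$, $\mathcal{K}_i := k_i'(r_i^* )\,a_i'(p_{i-1}^* )$, and $\mathcal{K}:=\prod_{i=1}^n\mathcal{K}_i$. A steady state is called (locally asymptotically) stable if every eigenvalue of the Jacobian matrix at it has negative real part. *)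

(* Defs.v *)
From HB Require Import structures.
From mathcomp Require Import all_boot all_order all_algebra.
From mathcomp Require Import all_classical all_reals all_analysis.
From mathcomp Require Import complex.
Set Implicit Arguments. Unset Strict Implicit. Unset Printing Implicit Defensive.
Import Order.TTheory GRing.Theory Num.Theory.
Import numFieldNormedType.Exports.
Local Open Scope ring_scope.
Local Open Scope classical_set_scope.

Definition prevI (n : nat) (i : 'I_n) : 'I_n := ord_pred i.

Definition C1_nonneg (R : realType) (f : R -> R) : Prop :=
  {within [set x : R | 0 <= x], continuous f} /\
  (forall x : R, 0 < x -> derivable f x 1) /\
  (forall x : R, 0 < x -> {for x, continuous (derive1 f)}).

Definition repression_fun (R : realType) (a : R -> R) : Prop :=
  C1_nonneg a /\ (forall x, 0 <= x -> 0 <= a x) /\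
  (forall x y, 0 <= x -> x < y -> a y < a x) /\ 0 < a 0.

Definition incr_std_fun (R : realType) (f : R -> R) : Prop :=
  C1_nonneg f /\ f 0 = 0 /\ (forall x y, 0 < x -> x < y -> f x < f y).

(* The state vector is (r_1,...,r_n,p_1,...,p_n) in 'rV_(n + n):
   the r-block is lsubmx, the p-block is rsubmx. *)
Definition repressilator_field (R : realType) (n : nat)
  (a dr dp k : 'I_n -> R -> R) (x : 'rV[R]_(n + n)) : 'rV[R]_(n + n) :=
  row_mx (\row_i (a i (rsubmx x 0 (prevI i)) - dr i (lsubmx x 0 i)))
         (\row_i (k i (lsubmx x 0 i) - dp i (rsubmx x 0 i))).

(* The Jacobian used in the statement is MathComp-Analysis' [jacobian]
   (derive.v): jacobian F x = lin1_mx ('d F x), i.e. the matrix of the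
   differential in the row-vector convention (transpose of the textbook
   Jacobian; same eigenvalues). *)

(* (Local asymptotic) stability: every (complex) eigenvalue of the
   Jacobian has negative real part. *)
Definition all_eigen_neg_re (R : realType) (m : nat) (A : 'M[R]_m) : Prop :=
  forall z : R[i], eigenvalue (map_mx (real_complex R) A) z -> Re z < 0.

Definition is_steady_state (R : realType) (m : nat) (F : 'rV[R]_m -> 'rV[R]_m)
  (x : 'rV[R]_m) : Prop := F x = 0.

(* Main.v *)
Require Import Defs.
From HB Require Import structures.
From mathcomp Require Import all_boot all_order all_algebra.
From mathcomp Require Import all_classical all_reals all_analysis.
From mathcomp Require Import complex.
Import Order.TTheory GRing.Theory Num.Theory.
Import numFieldNormedType.Exports.
Local Open Scope ring_scope.
Definition Jg {T : comPzRingType} {n} (al be kk aa : 'I_n -> T) : 'M[T]_(n+n) :=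
  block_mx (diag_mx (\row_l - al l)) (diag_mx (\row_l kk l))
    (\matrix_(i, l) (if i == prevI l then aa l else 0)) (diag_mx (\row_l - be l)).

Lemma Jg_mulL (T : comPzRingType) n (al be kk aa : 'I_n -> T) (v : 'rV[T]_(n+n)) l :
  (v *m Jg al be kk aa) 0 (lshift n l) =
  v 0 (rshift n (prevI l)) * aa l - v 0 (lshift n l) * al l.
Proof.
rewrite -{1}[v]hsubmxK /Jg mul_row_block row_mxEl !mul_mx_diag !mxE.
rewrite (bigD1 (prevI l)) //= big1 => [|i /negbTE H]; last by rewrite !mxE H mulr0.
by rewrite !mxE eqxx addr0 mulrN addrC.
Qed.

Lemma Jg_mulR (T : comPzRingType) n (al be kk aa : 'I_n -> T) (v : 'rV[T]_(n+n)) l :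
  (v *m Jg al be kk aa) 0 (rshift n l) =
  v 0 (lshift n l) * kk l - v 0 (rshift n l) * be l.
Proof.
rewrite -{1}[v]hsubmxK /Jg mul_row_block row_mxEr !mul_mx_diag !mxE.
by rewrite mulrN.
Qed.

Lemma Jg_map (T T' : comPzRingType) (f : {rmorphism T -> T'}) n (al be kk aa : 'I_n -> T) :
  map_mx f (Jg al be kk aa) = Jg (f \o al) (f \o be) (f \o kk) (f \o aa).
Proof.
rewrite /Jg map_block_mx !map_diag_mx; congr block_mx;
  apply/matrixP => i j; rewrite !mxE /=; try case: ifP => _;
  by rewrite ?rmorphN ?rmorph0.
Qed.

Lemma diff_by_coord (R : realType) m p (G : 'rV[R]_m -> 'rV[R]_p) x :
  (forall j, differentiable (fun y => G y 0 j) x) -> differentiable G x.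
Proof.
move=> H.
have -> : G = \sum_(j < p) (fun y => G y 0 j *: delta_mx 0 j).
  by rewrite fct_sumE; apply/funext => y; rewrite [LHS]row_sum_delta.
apply: differentiable_sum => j.
exact: differentiableZl.
Qed.

Lemma diff_coord (R : realType) m (g : R -> R) (p : 'rV[R]_m) c :
  derivable g (p 0 c) 1 -> differentiable (fun x : 'rV[R]_m => g (x 0 c)) p.
Proof.
move=> dg.
apply: (differentiable_comp (f := fun x : 'rV[R]_m => x 0 c) (g := g)).
  exact: differentiable_coord.
exact/derivable1_diffP.
Qed.

Lemma Dcoord (R : realType) m (g : R -> R) (p v : 'rV[R]_m) (c : 'I_m) :
  derivable g (p 0 c) 1 -> 'D_v (fun x : 'rV[R]_m => g (x 0 c)) p = v 0 c * derive1 g (p 0 c).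
Proof.
move=> dg.
have -> : 'D_v (fun x : 'rV[R]_m => g (x 0 c)) p = 'D_(v 0 c) g (p 0 c).
  have E : (fun h : R => h^-1 *: (((fun x : 'rV[R]_m => g (x 0 c)) \o shift p) (h *: v) - g (p 0 c)))
     = (fun h : R => h^-1 *: ((g \o shift (p 0 c)) (h *: v 0 c) - g (p 0 c))).
    by apply/funext => h /=; rewrite !mxE.
  by rewrite /derive E.
rewrite deriveE; last exact/derivable1_diffP.
rewrite derive1E'; last exact/derivable1_diffP.
rewrite -[in LHS](mulr1 (v 0 c)).
exact: linearZZ.

Qed.

Lemma J_eq (R : realType) n (a dr dp k : 'I_n -> R -> R) (rs ps : 'rV[R]_n) :
  (forall i, derivable (a i) (ps 0 (prevI i)) 1) ->
  (forall i, derivable (dr i) (rs 0 i) 1) ->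
  (forall i, derivable (dp i) (ps 0 i) 1) ->
  (forall i, derivable (k i) (rs 0 i) 1) ->
  jacobian (repressilator_field a dr dp k) (row_mx rs ps) =
  Jg (fun l => derive1 (dr l) (rs 0 l)) (fun l => derive1 (dp l) (ps 0 l))
     (fun l => derive1 (k l) (rs 0 l)) (fun l => derive1 (a l) (ps 0 (prevI l))).
Proof.
move=> Ha Hdr Hdp Hk.
set F := repressilator_field a dr dp k; set p := row_mx rs ps.
have pl i : p 0 (lshift n i) = rs 0 i by rewrite row_mxEl.
have pr i : p 0 (rshift n i) = ps 0 i by rewrite row_mxEr.
have FL l : (fun y => F y 0 (lshift n l)) =
    (fun y => a l (y 0 (rshift n (prevI l))) - dr l (y 0 (lshift n l))).
  by apply/funext => y; rewrite /F /repressilator_field row_mxEl !mxE.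
have FR l : (fun y => F y 0 (rshift n l)) =
    (fun y => k l (y 0 (lshift n l)) - dp l (y 0 (rshift n l))).
  by apply/funext => y; rewrite /F /repressilator_field row_mxEr !mxE.
have dA l : differentiable (fun y : 'rV[R]_(n+n) => a l (y 0 (rshift n (prevI l)))) p.
  by apply: diff_coord; rewrite pr.
have dDR l : differentiable (fun y : 'rV[R]_(n+n) => dr l (y 0 (lshift n l))) p.
  by apply: diff_coord; rewrite pl.
have dDP l : differentiable (fun y : 'rV[R]_(n+n) => dp l (y 0 (rshift n l))) p.
  by apply: diff_coord; rewrite pr.
have dK l : differentiable (fun y : 'rV[R]_(n+n) => k l (y 0 (lshift n l))) p.
  by apply: diff_coord; rewrite pl.
have dF : differentiable F p.
  apply: diff_by_coord => j; rewrite -(splitK j); case: (fintype.split j) => l /=.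
    by rewrite FL; exact: differentiableB.
  by rewrite FR; exact: differentiableB.
suff H : forall v, 'D_v F p = v *m Jg (fun l => derive1 (dr l) (rs 0 l))
     (fun l => derive1 (dp l) (ps 0 l))
     (fun l => derive1 (k l) (rs 0 l)) (fun l => derive1 (a l) (ps 0 (prevI l))).
  by apply/row_matrixP => i; rewrite !rowE -H deriveEjacobian.
move=> v; rewrite derive_mx; last exact: diff_derivable.
apply/rowP => j; rewrite mxE -(splitK j); case: (fintype.split j) => l /=.
  rewrite FL Jg_mulL.
  rewrite (deriveB (diff_derivable (v := v) (dA l)) (diff_derivable (v := v) (dDR l))).
  by rewrite !Dcoord ?pl ?pr.
rewrite FR Jg_mulR.
rewrite (deriveB (diff_derivable (v := v) (dK l)) (diff_derivable (v := v) (dDP l))).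
by rewrite !Dcoord ?pl ?pr.
Qed.

Lemma iter_ordS n (i : 'I_n) k : val (iter k (@ordS n) i) = ((i + k) %% n)%N.
Proof.
elim: k => [|k IH] /=; first by rewrite addn0 modn_small.
by rewrite IH -addn1 modnDml addn1 addnS.
Qed.

Lemma reach_ordS n (i j : 'I_n) : exists k, iter k (@ordS n) i = j.
Proof.
exists (j + n - i)%N; apply: val_inj; rewrite iter_ordS subnKC.
  by rewrite modnDr modn_small.
by rewrite (leq_trans (ltnW (ltn_ord i))) // leq_addl.
Qed.

Local Open Scope complex_scope.

Lemma spectral (R : realType) n (al be kk aa : 'I_n -> R) :
  (forall l, 0 <= al l) -> (forall l, 0 <= be l) ->
  `|\prod_(l < n) (kk l * aa l)| < \prod_(l < n) (al l * be l) ->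
  all_eigen_neg_re (Jg al be kk aa).
Proof.
move=> al0 be0 KD z /eigenvalueP [w Hw w0].
rewrite Jg_map in Hw; move/rowP: Hw => Hw.
have E1 l : (z + (al l)%:C) * w 0 (lshift n l) = (aa l)%:C * w 0 (rshift n (prevI l)).
  have := Hw (lshift n l); rewrite Jg_mulL !mxE /= => H.
  by rewrite mulrDl -H [_ * w 0 (lshift n l)]mulrC subrK mulrC.
have E2 l : (z + (be l)%:C) * w 0 (rshift n l) = (kk l)%:C * w 0 (lshift n l).
  have := Hw (rshift n l); rewrite Jg_mulR !mxE /= => H.
  by rewrite mulrDl -H [_ * w 0 (rshift n l)]mulrC subrK mulrC.
rewrite real_ltNge ?Creal_Re ?real0 //; apply/negP => Hre.
have key t : 0 <= t -> t%:C <= `|z + t%:C|.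
  move=> t0; have Rt : 'Re (t%:C) = t%:C by apply/Creal_ReP; rewrite complex_real.
  apply: le_trans (leif_Re_Creal _).1.
  by rewrite raddfD /= Rt lerDr.
have nC t : `|t%:C| = `|t|%:C.
  by rewrite normc_def /= [0 ^+ 2]expr2 mul0r addr0 sqrtr_sqr.
have alP l : 0 < al l.
  rewrite lt0r al0 andbT; apply/eqP => h; move: KD.
  by rewrite [X in _ < X](bigD1 l) //= h !mul0r ltNge normr_ge0.
have beP l : 0 < be l.
  rewrite lt0r be0 andbT; apply/eqP => h; move: KD.
  by rewrite [X in _ < X](bigD1 l) //= h mulr0 mul0r ltNge normr_ge0.
have I1 l : (al l)%:C * `|w 0 (lshift n l)| <= `|(aa l)%:C| * `|w 0 (rshift n (prevI l))|.
  rewrite -normrM -E1 normrM; apply: ler_wpM2r; first exact: normr_ge0.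
  exact: key.
have I2 l : (be l)%:C * `|w 0 (rshift n l)| <= `|(kk l)%:C| * `|w 0 (lshift n l)|.
  rewrite -normrM -E2 normrM; apply: ler_wpM2r; first exact: normr_ge0.
  exact: key.
have Main : (\prod_(l < n) ((al l)%:C * (be l)%:C)) *
    (\prod_(l < n) `|w 0 (lshift n l)| * \prod_(l < n) `|w 0 (rshift n l)|)
  <= (\prod_(l < n) (`|(kk l)%:C| * `|(aa l)%:C|)) *
    (\prod_(l < n) `|w 0 (lshift n l)| * \prod_(l < n) `|w 0 (rshift n l)|).
  apply: (@le_trans _ _ (\prod_(l < n) ((`|(aa l)%:C| * `|w 0 (rshift n (prevI l))|) *
                                     (`|(kk l)%:C| * `|w 0 (lshift n l)|)))).
    rewrite [X in X <= _](_ : _ = \prod_(l < n) (((al l)%:C * `|w 0 (lshift n l)|) *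
                                     ((be l)%:C * `|w 0 (rshift n l)|))); last first.
      by rewrite !big_split /= mulrACA.
    apply: ler_prod => l _; apply/andP; split.
      by rewrite mulr_ge0 // mulr_ge0 // ler0c.
    apply: ler_pM; [by rewrite mulr_ge0 // ler0c|by rewrite mulr_ge0 // ler0c|exact: I1|exact: I2].
  rewrite le_eqVlt; apply/orP; left; apply/eqP.
  rewrite !big_split /=.
  rewrite /prevI -(reindex_inj (P := predT) (F := fun l => `|w 0 (rshift n l)|) (@ord_pred_inj n)).
  by rewrite mulrACA; congr (_ * _); apply: mulrC.
have Dc : \prod_(l < n) ((al l)%:C * (be l)%:C) = (\prod_(l < n) (al l * be l))%:C.
  by rewrite rmorph_prod; apply: eq_bigr => l _; rewrite rmorphM.
have Kc : \prod_(l < n) (`|(kk l)%:C| * `|(aa l)%:C|) = (`|\prod_(l < n) (kk l * aa l)|)%:C.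
  by rewrite normr_prod rmorph_prod; apply: eq_bigr => l _; rewrite !nC normrM rmorphM.
rewrite Dc Kc in Main.
set P := (\prod_(l < n) `|w 0 (lshift n l)| * \prod_(l < n) `|w 0 (rshift n l)|) in Main.
have P0 : 0 <= P by rewrite mulr_ge0 // prodr_ge0.
move: P0; rewrite le0r => /orP [HP | HP]; last first.
  by move: Main; rewrite ler_pM2r // lecR leNgt KD.
have zB l : z + (be l)%:C != 0.
  apply/eqP => h; have := key _ (be0 l).
  by rewrite h normr0 -(rmorph0 (real_complex R)) lecR leNgt beP.
have zA l : z + (al l)%:C != 0.
  apply/eqP => h; have := key _ (al0 l).
  by rewrite h normr0 -(rmorph0 (real_complex R)) lecR leNgt alP.
have S1 l : w 0 (lshift n l) = 0 -> w 0 (rshift n l) = 0.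
  move=> H; have := E2 l; rewrite H mulr0 => /eqP.
  by rewrite mulf_eq0 (negbTE (zB l)) /= => /eqP.
have S2 l : w 0 (rshift n l) = 0 -> w 0 (lshift n (ordS l)) = 0.
  move=> H; have := E1 (ordS l); rewrite /prevI ordSK H mulr0 => /eqP.
  by rewrite mulf_eq0 (negbTE (zA _)) /= => /eqP.
have [l1 Hl1] : exists l, w 0 (lshift n l) = 0.
  move: HP; rewrite mulf_eq0 => /orP [] /prodf_eq0 [l _]; rewrite normr_eq0 => /eqP H.
    by exists l.
  by exists (ordS l); apply: S2.
have Hall k : w 0 (lshift n (iter k (@ordS n) l1)) = 0.
  by elim: k => //= k IH; apply/S2/S1.
have Uall j : w 0 (lshift n j) = 0 by have [k <-] := reach_ordS _ l1 j.
move/negP: w0; apply; apply/eqP/rowP => j; rewrite mxE -(splitK j).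
by case: (fintype.split j) => l /=; [exact: Uall | exact/S1/Uall].
Qed.

Lemma incr_ge0 (R : realType) (f : R -> R) x :
  incr_std_fun f -> 0 < x -> 0 <= derive1 f x.
Proof.
move=> [[_ [df _]] [_ inc]] x0.
apply: (@incr_derive1_ge0_itvy _ f false 0).
- by move=> y; rewrite ?inE /= in_itv /= andbT; apply: df.
- by move=> y z; rewrite !in_itv /= !andbT => y0 _; apply: inc.
- by rewrite in_itv /= andbT.
Qed.

Theorem proposition5 (R : realType) (n : nat) (a dr dp k : 'I_n -> R -> R)
  (rs ps : 'rV[R]_n) :
  (0 < n)%N -> odd n ->
  (forall i, repression_fun (a i)) ->
  (forall i, incr_std_fun (dr i)) ->
  (forall i, incr_std_fun (dp i)) ->
  (forall i, incr_std_fun (k i)) ->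
  (forall i, 0 < rs 0 i) -> (forall i, 0 < ps 0 i) ->
  is_steady_state (repressilator_field a dr dp k) (row_mx rs ps) ->
  let D := \prod_(i < n) (derive1 (dr i) (rs 0 i) * derive1 (dp i) (ps 0 i)) in
  let K := \prod_(i < n) (derive1 (k i) (rs 0 i) * derive1 (a i) (ps 0 (prevI i))) in
  `|K| < D ->
  all_eigen_neg_re (jacobian (repressilator_field a dr dp k) (row_mx rs ps)).
Proof.
move=> n0 odd_n Ha Hdr Hdp Hk rs0 ps0 _ D K KD.
rewrite J_eq.
- apply: spectral => //.
  + by move=> l; apply: incr_ge0.
  + by move=> l; apply: incr_ge0.
- by move=> i; case: (Ha i) => [[_ [H _]] _]; apply: H.
- by move=> i; case: (Hdr i) => [[_ [H _]] _]; apply: H.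
- by move=> i; case: (Hdp i) => [[_ [H _]] _]; apply: H.
- by move=> i; case: (Hk i) => [[_ [H _]] _]; apply: H.
Qed.
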